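(* Under Strategy 2A (described in the context), the expected number of uncles created during an attack cycle that are eventually referred is $\mathbb{E}[U]=q-q^{n_1+1}$.
   Context: Honest hashrate $p$, attacker hashrate $q$, $p+q=1$, $0<q<p$; $\gamma\in[0,1]$ is the fraction of honest hashrate mining on the attacker's block during a public competition between equal-height blocks. Attack cycles are i.i.d. words in S (attacker block) and H (honest block): H, SHS, SHH, or SSwH with $w$ a Dyck word; $\mathbb{P}[H]=p$, $\mathbb{P}[SHS]=pq^2$, $\mathbb{P}[SHH]=p^2q$, $\mathbb{P}[SSwH]=q^2p(pq)^{|w|}$ ($|w|$ half the length of $w$). Ethereum rules: an uncle is a non-official block whose parent is official; a nephew (official block) may refer an uncle at distance (height difference) at most $n_1$ ($n_1\ge2$ an integer). Strategy 2A (''brutal fork''): the attacker keeps his whole fork secret and releases it all at once at the end of the attack cycle, when an honest block would reduce his advance to one block (after a single attacker block, he publishes it to compete with the honest block); the attacker's fork wins in cycles starting with SS; all miners refer all possible uncles. $U(\omega)$ is the number of uncles created during $\omega$ referred by nephews in $\omega$ or a later cycle. *)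

(* Defs.v *)
From HB Require Import structures.
From mathcomp Require Import all_boot all_order all_algebra.
From mathcomp Require Import all_classical all_reals all_analysis.
Set Implicit Arguments. Unset Strict Implicit. Unset Printing Implicit Defensive.
Import Order.TTheory GRing.Theory Num.Theory.

(* Words over {S, H}: true = S (attacker block), false = H (honest block). *)

(* Dyck words: S = up step, H = down step. *)
Fixpoint dyck_aux (k : nat) (w : seq bool) : bool :=
  match w with
  | [::] => k == 0
  | true :: w' => dyck_aux k.+1 w'
  | false :: w' => if k is k'.+1 then dyck_aux k' w' else false
  end.
Definition dyck (w : seq bool) : bool := dyck_aux 0 w.

Local Open Scope ring_scope.

Definition cycle_prob {R : realType} (p q : R) (om : seq bool) : R :=
  match om with
  | [:: false] => p
  | [:: true; false; true] => p * q ^+ 2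
  | [:: true; false; false] => p ^+ 2 * q
  | true :: true :: r =>
      let w := take (size r).-1 r in
      if (last true r == false) && dyck w
      then q ^+ 2 * p * (p * q) ^+ (size w)./2 else 0
  | _ => 0
  end.

(* Blocks are identified by their creation
   time (index of the letter of the cycle word that created them).
   Heights are relative to the last official block before the cycle (height 0).
   bparent = None means the parent is that last official block. *)
Record block := Block {
  bminer    : bool;        (* true = attacker *)
  btime     : nat;
  bheight   : nat;
  bparent   : option nat;
  bofficial : bool;        (* official at the end of the cycle *)
  bpub      : nat
}.

(* Strategy 2A in a cycle SSwH: the attacker mines secretly on his fork,
   honest miners mine on the (public) honest chain; at the end the attacker
   publishes his whole fork (time tend), which becomes official. *)
Fixpoint fork_blocks (om : seq bool) (t na nh : nat) (la lh : option nat)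
    (tend : nat) : seq block :=
  match om with
  | [::] => [::]
  | true :: r =>
      Block true t na.+1 la true tend :: fork_blocks r t.+1 na.+1 nh (Some t) lh tend
  | false :: r =>
      Block false t nh.+1 lh false t :: fork_blocks r t.+1 na nh.+1 la (Some t) tend
  end.

(* The boolean c
   only matters in the cycle SHH: c = true iff the second honest block is
   mined on top of the attacker's block (probability gamma). *)
Definition cycle_blocks (om : seq bool) (c : bool) : seq block :=
  match om with
  | [:: false] => [:: Block false 0 1 None true 0]
  | [:: true; false; true] =>
      [:: Block true 0 1 None true 1; Block false 1 1 None false 1;
          Block true 2 2 (Some 0) true 2]
  | [:: true; false; false] =>
      if c then
        [:: Block true 0 1 None true 1; Block false 1 1 None false 1;
            Block false 2 2 (Some 0) true 2]
      else
        [:: Block true 0 1 None false 1; Block false 1 1 None true 1;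
            Block false 2 2 (Some 1) true 2]
  | _ => fork_blocks om 0 0 0 None None (size om).-1
  end.

Definition parent_official (bs : seq block) (b : block) : bool :=
  match bparent b with
  | None => true
  | Some t => has (fun b' => (btime b' == t) && bofficial b') bs
  end.

Definition is_uncle (bs : seq block) (b : block) : bool :=
  ~~ bofficial b && parent_official bs b.

Definition top_height (bs : seq block) : nat :=
  \max_(b <- bs | bofficial b) bheight b.

Definition can_refer (n1 : nat) (nephew u : block) : bool :=
  [&& bofficial nephew, (bpub u < btime nephew)%N,
      (bheight u < bheight nephew)%N & (bheight nephew - bheight u <= n1)%N].

(* u is eventually referred: by a nephew of the cycle, or by a nephew of a
   later cycle; later cycles produce an official block at every height
   > top_height, all mined after the current cycle, so the first of them
   (height top_height+1) refers u iff its distance to u is at most n1. *)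
Definition referred (n1 : nat) (bs : seq block) (u : block) : bool :=
  has (fun b => can_refer n1 b u) bs || ((top_height bs).+1 - bheight u <= n1)%N.

Definition U (n1 : nat) (bs : seq block) : nat :=
  count (fun b => is_uncle bs b && referred n1 bs b) bs.

(* Contribution to E[U] of the outcomes (cycle word of length n, coin c). *)
Definition EU_len {R : realType} (p q gamma : R) (n1 n : nat) : R :=
  \sum_(t : n.-tuple bool) \sum_(c : bool)
     cycle_prob p q t * (if c then gamma else 1 - gamma) * (U n1 (cycle_blocks t c))%:R.

(* Main.v *)
Require Import Defs.
From HB Require Import structures.
From mathcomp Require Import all_boot all_order all_algebra.
From mathcomp Require Import all_classical all_reals all_analysis.
Import Order.TTheory GRing.Theory Num.Theory.
From mathcomp Require Import zify ring lra.
Import numFieldNormedType.Exports.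

Definition tup_of_block (b : block) :=
  (bminer b, btime b, bheight b, bparent b, bofficial b, bpub b).
Definition block_of_tup (x : bool * nat * nat * option nat * bool * nat) :=
  let: (a, b, c, d, e, f) := x in Block a b c d e f.
Lemma tup_of_blockK : cancel tup_of_block block_of_tup.
Proof. by case. Qed.
HB.instance Definition _ := Equality.copy block (can_type tup_of_blockK).

Fixpoint fp (k : nat) (s : seq bool) : bool :=
  match s with
  | [::] => false
  | true :: s' => fp k.+1 s'
  | false :: s' => if k is k'.+1 then fp k' s' else s' == [::]
  end.

Fixpoint lead (s : seq bool) : nat :=
  if s is true :: s' then (lead s').+1 else 0.

Lemma fp_rcons k w x : fp k (rcons w x) = (x == false) && dyck_aux k w.
Proof.
elim: w k => [|[] w IH] k /=; first by case: x; case: k => //= k; case: k.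
  by rewrite IH.
case: k => [|k] /=; last exact: IH. by rewrite andbF -size_eq0 size_rcons.
Qed.

Lemma fp_shape k r : fp k r -> exists r', r = nseq (lead r) true ++ false :: r'.
Proof.
elim: r k => [|[] r IH] k //=.
  by move=> /IH [r' {1}->]; exists r'.
by move=> _; exists r.
Qed.


Lemma FB_prop s t0 na nh la lh T b :
  b \in fork_blocks s t0 na nh la lh T ->
  [/\ bofficial b = bminer b, (t0 <= btime b)%N & (bminer b -> na < bheight b)%N].
Proof.
elim: s t0 na nh la lh => [|[] s IH] t0 na nh la lh //=; rewrite inE => /predU1P[-> //=|/IH].
- by case=> -> /ltnW ? /= h; split=> // /h /ltnW.
- by case=> -> /ltnW ? /= h; split.
Qed.

Lemma FB_miner s t0 na nh la lh T :
  has bminer (fork_blocks s t0 na nh la lh T) ->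
  has (fun b => bminer b && (bheight b == na.+1)) (fork_blocks s t0 na nh la lh T).
Proof.
elim: s t0 na nh la lh => [|[] s IH] t0 na nh la lh //=.
  by rewrite eqxx.
by move=> /IH.
Qed.

Lemma FB_parent s t0 na nh la th T b :
  (th < t0)%N -> b \in fork_blocks s t0 na nh la (Some th) T -> ~~ bminer b ->
  exists t', [/\ bparent b = Some t', (t' = th \/ t0 <= t')%N &
    forall b', b' \in fork_blocks s t0 na nh la (Some th) T -> btime b' = t' ->
       bofficial b' = false].
Proof.
elim: s t0 na nh la th => [|[] s IH] t0 na nh la th //= lt; rewrite inE.
- case/predU1P=> [-> //|bin mb].
  have [t' [-> ht' H]] := IH _ _ _ _ _ (leqW lt) bin mb.
  exists t'; split => //.
    by case: ht' => [->|/ltnW]; [left|right].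
  move=> b'; rewrite inE => /predU1P[-> /= et|]; last exact: H.
  by exfalso; case: ht'; lia.
- case/predU1P=> [-> _|bin mb].
    exists th; split => //; first by left.
    move=> b'; rewrite inE => /predU1P[-> //|/FB_prop [_ h _] e].
    by move: (leq_trans lt (ltnW h)); rewrite e ltnn.
  have [t' [-> ht' H]] := IH _ _ _ _ _ (ltnSn t0) bin mb.
  exists t'; split => //.
    by right; case: ht' => [->|/ltnW].
  by move=> b'; rewrite inE => /predU1P[-> //|]; exact: H.
Qed.

Lemma FB_decomp j t0 na la r' T :
  exists pre la',
   [/\ fork_blocks (nseq j true ++ false :: r') t0 na 0 la None T =
       pre ++ Block false (t0 + j) 1 None false (t0 + j) ::
         fork_blocks r' (t0 + j).+1 (na + j) 1 la' (Some (t0 + j)) T,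
       forall b, b \in pre -> [&& bofficial b, btime b < t0 + j & bheight b <= na + j]%N &
       (0 < j -> has (fun b => bheight b == na + j) pre)%N].
Proof.
elim: j t0 na la => [|j IH] t0 na la /=.
  by exists [::], la; rewrite !addn0.
have [pre [la' [E H1 H2]]] := IH t0.+1 na.+1 (Some t0).
exists (Block true t0 na.+1 la true T :: pre), la'.
rewrite -!addSnnS E; split => //.
  move=> b; rewrite inE => /predU1P[-> /=|/H1 //].
  by lia.
move=> _ /=; case: j {IH E H1} H2 => [_|j H2]; first by rewrite addn0 eqxx.
by rewrite H2 ?orbT.
Qed.
Arguments FB_prop {s t0 na nh la lh T b}.
Arguments FB_parent {s t0 na nh la th T b}.
Arguments FB_miner {s t0 na nh la lh T}.

Lemma U_struct n1 J pre la' r' T :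
  (0 < J)%N ->
  (forall b, b \in pre -> [&& bofficial b, btime b < J & bheight b <= J]%N) ->
  has (fun b => bheight b == J) pre ->
  U n1 (pre ++ Block false J 1 None false J :: fork_blocks r' J.+1 J 1 la' (Some J) T)
  = (J <= n1)%N.
Proof.
move=> J0 Hpre Hhas.
set h0 := Block false J 1 None false J.
set rest := fork_blocks r' J.+1 J 1 la' (Some J) T.
set bs := pre ++ h0 :: rest.
have Hrest b : b \in rest -> is_uncle bs b = false.
  move=> bin; have [Eo _ _] := FB_prop bin.
  rewrite /is_uncle Eo; case mb: (bminer b) => //=.
  have [t' [Ep ht' H]] := FB_parent (ltnSn J) bin (negbT mb).
  rewrite /parent_official Ep has_cat /=; apply/negbTE; rewrite !negb_or; apply/and3P; split.
  - apply/hasPn => b' /Hpre /and3P[_ ht _]; apply/negP => /andP[/eqP e _]; case: ht'; lia.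
  - by rewrite andbF.
  - apply/hasPn => b' /H H'; apply/negP => /andP[/eqP /H' -> //].
rewrite /U count_cat /= (eq_in_count (a2 := pred0)); last first.
  by move=> b /Hpre /and3P[ob _ _]; rewrite /is_uncle ob.
rewrite count_pred0 (eq_in_count (a2 := pred0) (s := rest)); last first.
  by move=> b /Hrest ->.
rewrite count_pred0 /is_uncle /= add0n addn0; congr nat_of_bool.
rewrite /referred /= subSS subn0.
have Htop : (J <= top_height bs)%N.
  case/hasP: Hhas => b bin /eqP <-; rewrite /top_height.
  apply: leq_bigmax_seq; first by rewrite mem_cat bin.
  by case/and3P: (Hpre _ bin).
apply/idP/idP.
  case/orP => [/hasP [b]|]; last by move=> h; exact: leq_trans Htop h.
  rewrite mem_cat inE => /orP[/Hpre /and3P [_ ht _]|/orP[/eqP ->|bin]].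
  - by rewrite /can_refer /=; lia.
  - by rewrite /can_refer.
  - have [Eo _ Hh] := FB_prop bin; rewrite /can_refer Eo /=.
    case/and4P => mb _ _; move: (Hh mb); lia.
move=> Jn; case hm: (has bminer rest).
  move/FB_miner: hm => /hasP [b bin /andP [mb /eqP hb]].
  have [Eo ht _] := FB_prop bin.
  apply/orP; left; apply/hasP; exists b; first by rewrite mem_cat inE bin !orbT.
  rewrite /can_refer Eo mb hb /=; lia.
apply/orP; right; apply: leq_trans Jn; apply/bigmax_leqP_seq => b.
rewrite mem_cat inE => /orP[/Hpre /and3P [_ _ //]|/orP[/eqP -> //|bin]] ob.
have [Eo _ _] := FB_prop bin.
by move: hm; rewrite Eo in ob; move/hasPn => /(_ b bin); rewrite ob.
Qed.

Lemma U_SS n1 r c : fp 0 r ->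
  U n1 (cycle_blocks [:: true, true & r] c) = (lead r + 2 <= n1)%N.
Proof.
move=> /fp_shape [r' Er].
rewrite /cycle_blocks.
have -> : [:: true, true & r] = nseq (lead r).+2 true ++ false :: r' by rewrite {1}Er.
have [pre [la' [E H1 H2]]] := FB_decomp (lead r).+2 0 0 None r' (size (nseq (lead r).+2 true ++ false :: r')).-1.
rewrite !add0n in E H1 H2.
rewrite /= in E. rewrite [fork_blocks _ _ _ _ _ _ _]E.
rewrite U_struct // ?addn2 //; exact: H2.
Qed.

Local Open Scope classical_set_scope.
Local Open Scope ring_scope.
Section Tup.
Variable R : nmodType.
Lemma sum_tupleS m (F : seq bool -> R) :
  \sum_(t : m.+1.-tuple bool) F t =
  \sum_(t : m.-tuple bool) (F (true :: t) + F (false :: t)).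
Proof.
rewrite (reindex (fun x : bool * m.-tuple bool => [tuple of x.1 :: x.2])) /=.
  rewrite -(pair_big xpredT xpredT (fun b (t : m.-tuple bool) => F (b :: t))) /=.
  by rewrite big_bool /= -big_split.
exists (fun t : m.+1.-tuple bool => (thead t, [tuple of behead t])).
  by move=> [b t] _ /=; congr pair; apply/val_inj.
by move=> t _; rewrite [in RHS](tuple_eta t).
Qed.
Lemma sum_tuple0 (F : seq bool -> R) :
  \sum_(t : 0.-tuple bool) F t = F [::].
Proof. rewrite (big_pred1 [tuple]) // => t /=; symmetry; apply/eqP/val_inj; by case: t => [[]]. Qed.
End Tup.

Lemma U_SHS n1 c : (2 <= n1)%N -> U n1 (cycle_blocks [:: true; false; true] c) = 1%N.
Proof. case: n1 => [|[|n1]] // _. Qed.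
Lemma U_SHH n1 c : (2 <= n1)%N -> U n1 (cycle_blocks [:: true; false; false] c) = 1%N.
Proof. case: n1 => [|[|n1]] // _; by case: c. Qed.
Lemma U_H n1 c : U n1 (cycle_blocks [:: false] c) = 0%N.
Proof. by []. Qed.

Section Comp.
Variables (R : realType) (p q gamma : R) (n1 : nat).

Fixpoint wt (s : seq bool) : R :=
  if s is b :: s' then (if b then q else p) * wt s' else 1.

Lemma wt_rcons w x : wt (rcons w x) = wt w * (if x then q else p).
Proof. by elim: w => [|b w IH] /=; rewrite ?mul1r ?mulr1 // IH mulrA. Qed.

Lemma wt_dyck k w : dyck_aux k w -> wt w * q ^+ k = (p * q) ^+ (size w + k)./2.
Proof.
elim: w k => [|[] w IH] k; first by move/eqP->; rewrite mul1r.
  move=> /= /IH H; rewrite -[uphalf _]/((size w + k).+1./2) -addnS -H exprS; ring.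
case: k => [|k] // /= /IH H.
rewrite addnS /= [(p * q) ^+ _.+1]exprS -H exprS; ring.
Qed.

Lemma prob_SS r : cycle_prob p q [:: true, true & r] = q ^+ 2 * (if fp 0 r then wt r else 0).
Proof.
case/lastP: r => [|w x]; first by rewrite /cycle_prob /= mulr0.
rewrite /cycle_prob size_rcons /= -cats1 take_size_cat // last_cat /= cats1 fp_rcons.
case: x => /=; first by rewrite mulr0.
rewrite /dyck; case d: (dyck_aux 0 w); last by rewrite mulr0.
have := wt_dyck 0 w d; rewrite addn0 expr0 mulr1 wt_rcons => <-; ring.
Qed.

Definition Gs (t : seq bool) : R := \sum_(c : bool) cycle_prob p q t *
  (if c then gamma else 1 - gamma) * (U n1 (cycle_blocks t c))%:R.

Lemma Gs_F t : Gs (false :: t) = 0.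
Proof.
rewrite /Gs big_bool /=; case: t => [|x t] /=.
  by rewrite !mulr0 addr0.
by rewrite !mul0r addr0.
Qed.

Lemma Gs_TT r : (2 <= n1)%N -> Gs [:: true, true & r] =
  q ^+ 2 * (if fp 0 r then wt r else 0) * (lead r <= n1 - 2)%N%:R.
Proof.
move=> n12; rewrite /Gs prob_SS.
case h: (fp 0 r); last by rewrite big_bool /= mulr0 !mul0r addr0.
rewrite big_bool /= (U_SS n1 r true h).
have -> : (lead r + 2 <= n1)%N = (lead r <= n1 - 2)%N by apply/idP/idP; lia.
ring.
Qed.

Lemma Gs_TF t : (2 <= n1)%N -> Gs [:: true, false & t] =
  if t == [:: true] then p * q ^+ 2 else if t == [:: false] then p ^+ 2 * q else 0.
Proof.
move=> n12; rewrite /Gs big_bool.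
case: t => [|[] [|y t]]; rewrite ?(@U_SHS n1 _ n12) ?(@U_SHH n1 _ n12) /=.
- by rewrite !mul0r addr0.
- ring.
- by rewrite !mul0r addr0.
- ring.
- by rewrite !mul0r addr0.
Qed.

End Comp.

Section Ser.
Variables (R : realType) (p q gamma : R) (n1 : nat).
Local Notation wt := (@wt R p q).

Definition fA k (s : seq bool) : R := if fp k s then wt s else 0.
Definition fB L k (s : seq bool) : R := fA k s * (lead s <= L)%N%:R.
Definition fN (s : seq bool) : R := if s == [::] then wt s else 0.
Definition Av k m := \sum_(t : m.-tuple bool) fA k t.
Definition Bv L k m := \sum_(t : m.-tuple bool) fB L k t.
Definition Cv k m : R := if k is k'.+1 then Av k' m else (m == 0)%N%:R.

Lemma nil_sum m : \sum_(t : m.-tuple bool) fN t = (m == 0)%N%:R.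
Proof.
case: m => [|m]; first by rewrite sum_tuple0.
by rewrite big1 // => t _; rewrite /fN -size_eq0 size_tuple.
Qed.

Lemma Av0 k : Av k 0 = 0.
Proof. by rewrite /Av sum_tuple0. Qed.

Lemma AvS k m : Av k m.+1 = q * Av k.+1 m + p * Cv k m.
Proof.
rewrite /Av sum_tupleS big_split /= mulr_sumr; congr (_ + _).
  by apply: eq_bigr => t _; rewrite /fA /=; case: ifP; rewrite ?mulr0.
case: k => [|k] /=; last by rewrite /Av mulr_sumr; apply: eq_bigr => t _; rewrite /fA /=; case: ifP; rewrite ?mulr0.
rewrite -nil_sum mulr_sumr; apply: eq_bigr => t _; rewrite /fA /fN /=; case: ifP; rewrite ?mulr0 //.
Qed.

Lemma Bv0 L k : Bv L k 0 = 0.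
Proof. by rewrite /Bv sum_tuple0 /fB /fA /= mul0r. Qed.

Lemma BvS L k m : Bv L k m.+1 =
  (if L is L'.+1 then q * Bv L' k.+1 m else 0) + p * Cv k m.
Proof.
rewrite /Bv sum_tupleS big_split /=; congr (_ + _).
  case: L => [|L]; first by rewrite big1 // => t _; rewrite /fB mulr0.
  rewrite mulr_sumr; apply: eq_bigr => t _; rewrite /fB /fA /=; by case: ifP => _; rewrite ?mul0r ?mulr0 ?mulrA ?ltnS.
case: k => [|k] /=; last first.
  by rewrite /Av mulr_sumr; apply: eq_bigr => t _; rewrite /fB /fA /=; case: ifP; rewrite ?mulr0 ?mul0r // mulr1.
rewrite -nil_sum mulr_sumr; apply: eq_bigr => t _; rewrite /fB /fA /fN /=; by case: ifP; rewrite ?mulr0 ?mul0r ?mulr1.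
Qed.

End Ser.

Section Lim.
Variables (R : realType) (p q : R).
Hypotheses (pq1 : p + q = 1) (q0 : 0 < q) (qp : q < p).
Local Notation Av := (@Av R p q).
Local Notation Bv := (@Bv R p q).
Local Notation Cv := (@Cv R p q).

Fixpoint Surv (N k : nat) : R :=
  if N is N'.+1 then q * Surv N' k.+1 + (if k is k'.+1 then p * Surv N' k' else 0) else 1.

Lemma Surv_id N k : \sum_(n < N.+1) Av k n + Surv N k = 1.
Proof.
elim: N k => [|N IH] k; first by rewrite big_ord1 Av0 add0r.
rewrite big_ord_recl Av0 add0r.
under eq_bigr do rewrite AvS.
rewrite big_split /= -!mulr_sumr /=.
move: (IH k.+1) => HA.
case: k HA => [|k] HA /=.
  have -> : \sum_(i < N.+1) ((i : nat) == 0%N)%:R = 1 :> R.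
    by rewrite big_ord_recl /= big1 ?addr0 // => i _.
  rewrite mulr1 addr0 -addrA addrCA -mulrDr HA mulr1; exact: pq1.
have HB := IH k.
rewrite addrACA -!mulrDr HA HB !mulr1 addrC; exact: pq1.
Qed.

Let lam := (2 * q)^-1.
Let c := 2^-1 + 2 * p * q.

Lemma Surv_bound N k : 0 <= Surv N k <= lam ^+ k * c ^+ N.
Proof.
have h1 := pq1; have h2 := q0; have h3 := qp.
have p0 : 0 < p by lra.
have lam1 : 1 <= lam.
  rewrite /lam -[1]invr1 lef_pV2 ?posrE //; lra.
have lamq : lam * (2 * q) = 1 by rewrite /lam mulVf //; lra.
have c0 : 0 <= c by rewrite /c; apply: addr_ge0 => //; rewrite ?invr_ge0; nra.
have hc : 2^-1 <= c by rewrite /c lerDl; nra.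
elim: N k => [|N IH] k /=.
  by rewrite expr0 mulr1 ler01 exprn_ege1.
have [A1 A2] := andP (IH k.+1).
case: k A1 A2 => [|k] A1 A2.
  rewrite addr0 expr0 mul1r; apply/andP; split; first by nra.
  have : q * Surv N 1 <= q * (lam * c ^+ N) by rewrite ler_pM2l //; rewrite expr1 in A2.
  have : q * lam = 2^-1 by rewrite -[q * lam]mul1r -[1](mulfV (x:=2)) //; rewrite mulrC; lra.
  move=> ql H; apply: le_trans H _; rewrite mulrA ql exprS; apply: ler_wpM2r => //.
  by rewrite exprn_ge0.
have [B1 B2] := andP (IH k).
apply/andP; split; first by nra.
have e2 : lam * c = q * lam ^+ 2 + p.
  rewrite /c /lam; field; lra.
have E : lam ^+ k.+1 * c ^+ N.+1 = q * (lam ^+ k.+2 * c ^+ N) + p * (lam ^+ k * c ^+ N).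
  have -> : lam ^+ k.+1 * c ^+ N.+1 = lam ^+ k * c ^+ N * (lam * c) by rewrite !exprS; ring.
  rewrite e2; rewrite !exprS; ring.
rewrite E lerD // ler_pM2l //.
Qed.

Lemma c_lt1 : `|c| < 1.
Proof.
have h1 := pq1; have h2 := q0; have h3 := qp.
have c0 : 0 <= c by rewrite /c; apply: addr_ge0 => //; rewrite ?invr_ge0; nra.
rewrite ger0_norm // /c.
have : 2 * p * q < 2^-1.
  have -> : (2^-1 : R) = (p + q) ^+ 2 / 2 by rewrite h1 expr1n mul1r.
  rewrite ltr_pdivlMr //; nra.
lra.
Qed.

Lemma Surv_cvg k : (fun N => Surv N k) @ \oo --> 0.
Proof.
apply: (@squeeze_cvgr nat \oo eventually_filter R (cst 0) (fun N => lam ^+ k * c ^+ N)).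
- by near=> N; exact: Surv_bound.
- exact: cvg_cst.
- rewrite -(mulr0 (lam ^+ k)); apply: cvgMl_tmp; exact: cvg_expr c_lt1.
Unshelve. all: by end_near. Qed.

Lemma SA_cvg k : (fun N => \sum_(n < N) Av k n) @ \oo --> (1:R).
Proof.
rewrite -cvg_shiftS /=.
have -> : (fun N => \sum_(n < N.+1) Av k n) = (fun N => 1 - Surv N k).
  by apply/funext => N; rewrite -(Surv_id N k) addrK.
have H := cvgB (cvg_cst (1:R)) (Surv_cvg k); rewrite subr0 in H; exact: H.
Qed.

End Lim.

Section Fin.
Variables (R : realType) (p q gamma : R) (n1 : nat).
Hypotheses (pq1 : p + q = 1) (q0 : 0 < q) (qp : q < p) (n12 : (2 <= n1)%N).
Local Notation Av := (@Av R p q).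
Local Notation Bv := (@Bv R p q).
Local Notation Cv := (@Cv R p q).
Local Notation Gs := (@Gs R p q gamma n1).

Lemma SC_cvg k : (fun N => \sum_(n < N) Cv k n) @ \oo --> (1:R).
Proof.
case: k => [|k]; first last.
  have -> : (fun N => \sum_(n < N) Cv k.+1 n) = (fun N => \sum_(n < N) Av k n) by [].
  exact: (@SA_cvg R p q pq1 q0 qp k).
rewrite -cvg_shiftS /=.
have -> : (fun N => \sum_(n < N.+1) Cv 0 n) = (fun N => 1).
  apply/funext => N; rewrite big_ord_recl /= big1 ?addr0 // => i _.
exact: cvg_cst.
Qed.

Lemma SB_cvg L k : (fun N => \sum_(n < N) Bv L k n) @ \oo --> (1 - q ^+ L.+1).
Proof.
elim: L k => [|L IH] k; rewrite -cvg_shiftS /=.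
  have -> : (fun N => \sum_(n < N.+1) Bv 0 k n) = (fun N => p * \sum_(n < N) Cv k n).
    apply/funext => N; rewrite big_ord_recl Bv0 add0r mulr_sumr.
    by apply: eq_bigr => i _; rewrite BvS add0r.
  have H := cvgMl_tmp (a:=p) (SC_cvg k).
  have -> : 1 - q ^+ 1 = p * 1 by rewrite expr1 mulr1 -pq1 addrK.
  exact: H.
have -> : (fun N => \sum_(n < N.+1) Bv L.+1 k n) =
    (fun N => q * \sum_(n < N) Bv L k.+1 n + p * \sum_(n < N) Cv k n).
  apply/funext => N; rewrite big_ord_recl Bv0 add0r !mulr_sumr -big_split.
  by apply: eq_bigr => i _; rewrite BvS.
have H := cvgD (cvgMl_tmp (a:=q) (IH k.+1)) (cvgMl_tmp (a:=p) (SC_cvg k)).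
have -> : 1 - q ^+ L.+2 = q * (1 - q ^+ L.+1) + p * 1.
  rewrite -[p](addrK q) pq1 exprS; ring.
exact: H.
Qed.

Lemma EU_sum n : EU_len p q gamma n1 n = \sum_(t : n.-tuple bool) Gs t.
Proof. by []. Qed.

Lemma Gs_nil : Gs [::] = 0.
Proof. by rewrite /Gs big_bool /= !mul0r addr0. Qed.

Lemma Gs_T : Gs [:: true] = 0.
Proof. by rewrite /Gs big_bool /= !mul0r addr0. Qed.

Lemma EU0 : EU_len p q gamma n1 0 = 0.
Proof. by rewrite EU_sum sum_tuple0 Gs_nil. Qed.

Lemma EU1 : EU_len p q gamma n1 1 = 0.
Proof. by rewrite EU_sum sum_tupleS (@sum_tuple0 _ (fun s => Gs (true :: s) + Gs (false :: s))) Gs_T Gs_F addr0. Qed.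

Lemma EUSS m : EU_len p q gamma n1 m.+2 =
  q ^+ 2 * Bv (n1 - 2) 0 m + (m == 1)%N%:R * (p * q ^+ 2 + p ^+ 2 * q).
Proof.
rewrite EU_sum sum_tupleS.
under eq_bigr do rewrite Gs_F addr0.
rewrite (@sum_tupleS _ _ (fun s => Gs (true :: s))) big_split /=; congr (_ + _).
  rewrite /Bv mulr_sumr; apply: eq_bigr => t _; rewrite Gs_TT // /fB mulrA.
  by rewrite /fA.
under eq_bigr do rewrite Gs_TF //.
pose G2 := fun s : seq bool => if s == [:: true] then p * q ^+ 2 else if s == [:: false] then p ^+ 2 * q else 0.
rewrite -/(G2 _).
case: m => [|[|m]].
- by rewrite (@sum_tuple0 _ G2) /= mul0r.
- rewrite (@sum_tupleS _ _ G2).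
  by rewrite (@sum_tuple0 _ (fun s => G2 (true :: s) + G2 (false :: s))) /= mul1r.
- rewrite big1 ?mul0r // => t _.
  have st := size_tuple t.
  case: eqP => [e|_]; first by move: st; rewrite e.
  by case: eqP => [e|_] //; move: st; rewrite e.
Qed.

End Fin.

Lemma ind1_cvg (R : realType) : (fun N => \sum_(n < N) (((n : nat) == 1)%N%:R : R)) @ \oo --> (1:R).
Proof.
rewrite -2!cvg_shiftS.
have E : forall N, \sum_(n < N.+2) (((n : nat) == 1)%N%:R : R) = 1.
  move=> N; rewrite big_ord_recl big_ord_recl /= big1 ?addr0 ?add0r // => i _.
rewrite (eq_cvg _ _ E); exact: cvg_cst.
Qed.

Theorem proposition12 (R : realType) (p q gamma : R) (n1 : nat) :
  p + q = 1 -> 0 < q -> q < p -> 0 <= gamma <= 1 -> (2 <= n1)%N ->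
  (fun N : nat => \sum_(n < N) EU_len p q gamma n1 n) @ \oo --> q - q ^+ n1.+1.
Proof.
move=> pq1 q0 qp _ n12.
rewrite -2!cvg_shiftS.
have E : forall N, \sum_(n < N.+2) EU_len p q gamma n1 n =
   q ^+ 2 * \sum_(n < N) @Bv R p q (n1 - 2) 0 n +
   (p * q ^+ 2 + p ^+ 2 * q) * \sum_(n < N) (((n : nat) == 1)%N%:R : R).
  move=> N; rewrite big_ord_recl big_ord_recl /=.
  rewrite (EU0 R p q gamma n1) (EU1 R p q gamma n1) !add0r.
  under eq_bigr do rewrite (@EUSS R p q gamma n1 n12).
  rewrite big_split /= !mulr_sumr; congr (_ + _); apply: eq_bigr => i _; by rewrite mulrC.
rewrite (eq_cvg _ _ E).
have HB := @SB_cvg R p q pq1 q0 qp (n1 - 2) 0.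
have H := cvgD (cvgMl_tmp (a := q ^+ 2) HB) (cvgMl_tmp (a := p * q ^+ 2 + p ^+ 2 * q) (ind1_cvg R)).
have e : q ^+ n1.+1 = q ^+ 2 * q ^+ (n1 - 2).+1.
  by rewrite -exprD; congr (_ ^+ _); lia.
have hp : p = 1 - q by rewrite -pq1 addrK.
have -> : q - q ^+ n1.+1 = q ^+ 2 * (1 - q ^+ (n1 - 2).+1) + (p * q ^+ 2 + p ^+ 2 * q) * 1.
  rewrite e hp; ring.
exact: H.
Qed.
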